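(* Let $L\ge2$, $i^*\in\{1,\dots,L-1\}$, $N\ge d_x$, and $X_\epsilon$ of rank $d_x$. Let $F:\mathbb R^{d_x}\to\mathbb R^{d_{i^*}}$ be any function, $F(X)\in\mathbb R^{d_{i^*}\times N}$ the matrix with columns $F(x_i)$, and $\tilde W\in\mathbb R^{d_y\times d_{i^*}}$ with $\tilde WF(X)=Y$. Assume $p\ge\mathrm{rank}\big(YX_\epsilon^T(X_\epsilon X_\epsilon^T)^{-1}\big)$ and $\min_{0\le i\le i^*}d_i\ge\mathrm{rank}\big(F(X)X_\epsilon^T(X_\epsilon X_\epsilon^T)^{-1}\big)$. Consider the loss $$\mathcal L_{st}^F(W_L,\dots,W_1)=\|W_{L:1}X_\epsilon-Y\|_F^2+\lambda\|W_{i^*:1}X_\epsilon-F(X)\|_F^2 .$$ Then every global minimizer of $\mathcal L_{base}$ and every global minimizer of $\mathcal L_{st}^F$ have end-to-end matrix $W_{L:1}=YX_\epsilon^T(X_\epsilon X_\epsilon^T)^{-1}$.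
   Context: Clean inputs $x_i\in\mathbb R^{d_x}$, targets $y_i\in\mathbb R^{d_y}$, noise $\epsilon_i\in\mathbb R^{d_x}$, $i=1,\dots,N$; $X_\epsilon$ has columns $x_i+\epsilon_i$, $Y\in\mathbb R^{d_y\times N}$ has columns $y_i$. A deep linear network with $L$ layers is a tuple $(W_L,\dots,W_1)$ with $W_i\in\mathbb R^{d_i\times d_{i-1}}$, $d_0=d_x$, $d_L=d_y$; $W_{i:j}:=W_iW_{i-1}\cdots W_j$; $p:=\min_{0\le i\le L}d_i$. Base loss: $\mathcal L_{base}(W_L,\dots,W_1)=\|W_{L:1}X_\epsilon-Y\|_F^2$. $\lambda>0$ is fixed. *)

(* Defs.v *)
From mathcomp Require Import all_boot all_order all_algebra.
Set Implicit Arguments. Unset Strict Implicit. Unset Printing Implicit Defensive.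
Import Order.TTheory GRing.Theory Num.Theory.
Local Open Scope ring_scope.

(* A deep linear network with layer widths d : nat -> nat (d 0 = d_x, d L = d_y):
   layer k+1 is  W k : 'M_(d k.+1, d k)   (i.e. W_{k+1} in the paper).
   Layers with index >= L are irrelevant to every quantity below. *)
Definition network (R : realFieldType) (d : nat -> nat) :=
  forall k : nat, 'M[R]_(d k.+1, d k).

Fixpoint e2e (R : realFieldType) (d : nat -> nat) (W : network R d) (k : nat)
  : 'M[R]_(d k, d 0) :=
  match k with
  | 0 => 1%:M
  | k'.+1 => W k' *m e2e W k'
  end.

Definition frob2 (R : realFieldType) m n (A : 'M[R]_(m, n)) : R :=
  \sum_(i < m) \sum_(j < n) (A i j) ^+ 2.

Definition mindim (d : nat -> nat) (k : nat) : nat :=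
  \big[minn/d 0]_(i < k.+1) d i.

Definition applyF (R : realFieldType) (a b N : nat)
  (F : 'cV[R]_a -> 'cV[R]_b) (X : 'M[R]_(a, N)) : 'M[R]_(b, N) :=
  \matrix_(r < b, j < N) F (col j X) r 0.

Definition loss_base (R : realFieldType) d L N
  (Xe : 'M[R]_(d 0, N)) (Y : 'M[R]_(d L, N)) (W : network R d) : R :=
  frob2 (e2e W L *m Xe - Y).

Definition loss_st (R : realFieldType) d L istar N (lambda : R)
  (Xe : 'M[R]_(d 0, N)) (Y : 'M[R]_(d L, N)) (FX : 'M[R]_(d istar, N))
  (W : network R d) : R :=
  frob2 (e2e W L *m Xe - Y) + lambda * frob2 (e2e W istar *m Xe - FX).

Definition global_min (R : realFieldType) d (f : network R d -> R)
  (W : network R d) : Prop :=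
  forall W' : network R d, f W <= f W'.

(* Main.v *)
Require Import Defs.
From mathcomp Require Import all_boot all_order all_algebra.
From mathcomp Require Import lra.
Import Order.TTheory GRing.Theory Num.Theory.
Local Open Scope ring_scope.
Module Helpers.
Set Implicit Arguments. Unset Strict Implicit.
Section Frob.
Variable R : realFieldType.

Lemma frob2_tr m n (A : 'M[R]_(m, n)) : frob2 A = \tr (A *m A^T).
Proof.
rewrite /frob2 /mxtrace; apply: eq_bigr => i _; rewrite !mxE.
by apply: eq_bigr => j _; rewrite !mxE expr2.
Qed.

Lemma frob2_ge0 m n (A : 'M[R]_(m, n)) : 0 <= frob2 A.
Proof. by apply: sumr_ge0 => i _; apply: sumr_ge0 => j _; apply: sqr_ge0. Qed.

Lemma frob2_eq0 m n (A : 'M[R]_(m, n)) : frob2 A = 0 -> A = 0.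
Proof.
move=> /eqP; rewrite psumr_eq0 => [/allP H|i _]; last first.
  by apply: sumr_ge0 => j _; apply: sqr_ge0.
apply/matrixP => i j; rewrite mxE.
have /implyP := H i (mem_index_enum _) => /(_ isT).
rewrite psumr_eq0 => [/allP H2|k _]; last by apply: sqr_ge0.
have /implyP := H2 j (mem_index_enum _) => /(_ isT).
by rewrite sqrf_eq0 => /eqP.
Qed.

Lemma frob2D_orth m n (U V : 'M[R]_(m, n)) : U *m V^T = 0 ->
  frob2 (U + V) = frob2 U + frob2 V.
Proof.
move=> H; have H' : V *m U^T = 0 by rewrite -[V]trmxK -trmx_mul H trmx0.
rewrite !frob2_tr linearD /= mulmxDl !mulmxDr H H' addr0 add0r mxtraceD.
by [].
Qed.
Lemma dummy : True. Proof. by [].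
Qed.

Lemma gram_unit n N (Xe : 'M[R]_(n, N)) : row_free Xe -> Xe *m Xe^T \in unitmx.
Proof.
move=> fr; rewrite -row_free_unit; apply: inj_row_free => v Hv.
have : frob2 (v *m Xe) = 0.
  by rewrite frob2_tr trmx_mul mulmxA -(mulmxA v) Hv mul0mx mxtrace0.
move/frob2_eq0 => /eqP; rewrite mulmx_free_eq0 //; by move/eqP.
Qed.

Lemma ls_decomp n N m (Xe : 'M[R]_(n, N)) (T : 'M[R]_(m, N)) (A : 'M[R]_(m, n)) :
  row_free Xe ->
  frob2 (A *m Xe - T) =
  frob2 ((A - T *m Xe^T *m invmx (Xe *m Xe^T)) *m Xe)
  + frob2 (T *m Xe^T *m invmx (Xe *m Xe^T) *m Xe - T).
Proof.
move=> fr; set S := Xe *m Xe^T; set M := T *m Xe^T *m invmx S.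
have SU := gram_unit fr.
have -> : A *m Xe - T = (A - M) *m Xe + (M *m Xe - T).
  by rewrite mulmxBl addrA subrK.
apply: frob2D_orth.
have ST : S^T = S by rewrite /S trmx_mul trmxK.
have -> : (M *m Xe - T)^T = Xe^T *m M^T - T^T by rewrite linearB /= trmx_mul.
have -> : M^T = invmx S *m Xe *m T^T.
  by rewrite /M !trmx_mul trmx_inv ST trmxK mulmxA.
rewrite -mulmxA mulmxBr !mulmxA.
have -> : Xe *m Xe^T *m invmx S = 1%:M by rewrite mulmxV.
by rewrite mul1mx subrr mulmx0.
Qed.

Lemma ls_min n N m (Xe : 'M[R]_(n, N)) (T : 'M[R]_(m, N)) (A : 'M[R]_(m, n)) :
  row_free Xe ->
  frob2 (A *m Xe - T) <= frob2 (T *m Xe^T *m invmx (Xe *m Xe^T) *m Xe - T) ->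
  A = T *m Xe^T *m invmx (Xe *m Xe^T).
Proof.
move=> fr; rewrite ls_decomp // => H.
have H0 : frob2 ((A - T *m Xe^T *m invmx (Xe *m Xe^T)) *m Xe) = 0.
  apply/eqP; rewrite eq_le frob2_ge0 andbT; lra.
move/frob2_eq0/eqP: H0; rewrite mulmx_free_eq0 // subr_eq0; by move/eqP.
Qed.

End Frob.
Section Build.
Variable R : realFieldType.
Variable d : nat -> nat.

Definition iota_ r b (B : 'M[R]_(d b, r)) j : 'M[R]_(d j, r) :=
  if j == b then pid_mx (d b) *m B else pid_mx r.
Definition pi_ r a (A : 'M[R]_(r, d a)) j : 'M[R]_(r, d j) :=
  if j == a then A *m pid_mx (d a) else pid_mx r.

Lemma iota_b r b B : @iota_ r b B b = B.
Proof. by rewrite /iota_ eqxx pid_mx_1 mul1mx. Qed.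
Lemma iota_nb r b B j : j != b -> @iota_ r b B j = pid_mx r.
Proof. by rewrite /iota_ => /negbTE ->. Qed.
Lemma pi_a r a A : @pi_ r a A a = A.
Proof. by rewrite /pi_ eqxx pid_mx_1 mulmx1. Qed.
Lemma pi_na r a A j : j != a -> @pi_ r a A j = pid_mx r.
Proof. by rewrite /pi_ => /negbTE ->. Qed.

Lemma pid_pid r n : (r <= n)%N -> (pid_mx r : 'M[R]_(r, n)) *m (pid_mx r : 'M_(n, r)) = 1%:M.
Proof. by move=> h; rewrite mul_pid_mx minnn (minn_idPr h) pid_mx_1. Qed.

Lemma build (s L : nat) (P : 'M[R]_(d s, d 0)) (Q : 'M[R]_(d L, d s)) :
  (0 < s)%N -> (s < L)%N ->
  (forall i, (i <= s)%N -> (\rank P <= d i)%N) ->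
  (forall i, (s <= i)%N -> (i <= L)%N -> (\rank Q <= d i)%N) ->
  exists W : network R d, e2e W s = P /\ e2e W L = Q *m P.
Proof.
move=> s0 sL hP hQ.
pose W : network R d := fun k =>
  if (k < s)%N then iota_ (col_base P) (k.+1) *m pi_ (row_base P) k
  else iota_ (col_base Q) (k.+1) *m pi_ (row_base Q) k.
have seg1 : forall k, (k.+1 <= s)%N ->
    e2e W k.+1 = iota_ (col_base P) k.+1 *m row_base P.
  elim=> [|k IH] hk.
    by rewrite /= mulmx1 /W hk pi_a.
  change (e2e W k.+2) with (W k.+1 *m e2e W k.+1).
  rewrite IH ?(ltnW hk) // /W hk -!mulmxA (mulmxA (pi_ _ _)).
  rewrite (@pi_na _ 0 _ k.+1) // (@iota_nb _ s _ k.+1); last by rewrite neq_ltn hk.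
  by rewrite pid_pid ?mul1mx //; apply: hP; apply: ltnW.
have eS : e2e W s = P.
  by have := seg1 s.-1; rewrite prednK // => ->; rewrite // iota_b mulmx_base.
have seg2 : forall k, (s < k)%N -> (k <= L)%N ->
    e2e W k = iota_ (col_base Q) k *m row_base Q *m P.
  elim=> [//|k IH] hk hkL.
  change (e2e W k.+1) with (W k *m e2e W k).
  rewrite /W ltnNge -ltnS hk /=.
  have [ks|ks|ks] := ltngtP s k.
  - rewrite IH // ?(ltnW hkL) // -!mulmxA (mulmxA (pi_ _ _)).
    rewrite (@pi_na _ s _ k) ?(@iota_nb _ L _ k); first last.
    + by rewrite neq_ltn ks orbT.
    + by rewrite neq_ltn hkL.
    by rewrite pid_pid ?mul1mx //; apply: hQ; rewrite ?(ltnW ks) ?(ltnW hkL).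
  - by move: ks; rewrite ltnNge -ltnS hk.
  - by subst k; rewrite eS pi_a mulmxA.
exists W; split => //.
by rewrite seg2 // iota_b mulmx_base.
Qed.

End Build.

Lemma bigmin_seq (I : eqType) (r : seq I) (idx : nat) (F : I -> nat) j :
  j \in r -> (\big[minn/idx]_(i <- r) F i <= F j)%N.
Proof.
elim: r => //= a r IH; rewrite inE big_cons => /orP[/eqP ->|h].
  exact: geq_minl.
exact: leq_trans (geq_minr _ _) (IH h).
Qed.

Lemma mindim_le (d : nat -> nat) k i : (i <= k)%N -> (mindim d k <= d i)%N.
Proof.
rewrite -ltnS => hi.
exact: (@bigmin_seq _ (index_enum 'I_k.+1) _ (fun j : 'I_k.+1 => d j) (Ordinal hi) (mem_index_enum _)).
Qed.

End Helpers.
Import Helpers.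

Theorem mainTheorem9 (R : realFieldType) (d : nat -> nat) (L istar N : nat)
  (lambda : R) (X E : 'M[R]_(d 0, N)) (Y : 'M[R]_(d L, N))
  (F : 'cV[R]_(d 0) -> 'cV[R]_(d istar)) :
  (2 <= L)%N -> (1 <= istar)%N -> (istar < L)%N -> 0 < lambda ->
  (d 0 <= N)%N ->
  \rank ((X + E)%R) = d 0 ->
  (exists Wt : 'M[R]_(d L, d istar), Wt *m applyF F X = Y) ->
  (\rank (Y *m (X + E)^T *m invmx ((X + E) *m (X + E)^T)) <= mindim d L)%N ->
  (\rank (applyF F X *m (X + E)^T *m invmx ((X + E) *m (X + E)^T))
     <= mindim d istar)%N ->
  (forall W : network R d, global_min (loss_base (X + E) Y) W ->
     e2e W L = Y *m (X + E)^T *m invmx ((X + E) *m (X + E)^T)) /\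
  (forall W : network R d,
     global_min (loss_st lambda (X + E) Y (applyF F X)) W ->
     e2e W L = Y *m (X + E)^T *m invmx ((X + E) *m (X + E)^T)).
Proof.
move=> hL hi hiL hlam _ hrk [Wt hWt] rM rG.
set Xe := X + E in hrk *.
set FX := applyF F X in hWt rG *.
have fr : row_free Xe by rewrite /row_free hrk.
set Ms := Y *m Xe^T *m invmx (Xe *m Xe^T) in rM *.
set Gs := FX *m Xe^T *m invmx (Xe *m Xe^T) in rG *.
have MWG : Ms = Wt *m Gs by rewrite /Ms /Gs -hWt !mulmxA.
split.
- move=> W Wmin.
  pose r := \rank Ms.
  have rle : forall i, (i <= L)%N -> (r <= d i)%N.
    by move=> i hiL'; apply: leq_trans rM (mindim_le d hiL').
  have [W0 [_ W0L]] := @build R d istar L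
     ((pid_mx r : 'M_(d istar, r)) *m row_base Ms)
     (col_base Ms *m (pid_mx r : 'M_(r, d istar))) hi hiL
     (fun i h => leq_trans (mxrankM_maxl _ _) (leq_trans (rank_leq_col _) (rle i (leq_trans h (ltnW hiL)))))
     (fun i _ h => leq_trans (mxrankM_maxl _ _) (leq_trans (rank_leq_col _) (rle i h))).
  have e : col_base Ms *m (pid_mx r : 'M_(r, d istar)) *m ((pid_mx r : 'M_(d istar, r)) *m row_base Ms) = Ms.
    rewrite -mulmxA (mulmxA (pid_mx r)) pid_pid ?mul1mx ?mulmx_base //.
    by apply: rle; apply: ltnW.
  apply: (ls_min fr).
  by have := Wmin W0; rewrite /loss_base W0L e.
- move=> W Wmin.
  pose V := Ms *m pinvmx Gs.
  have VG : V *m Gs = Ms by rewrite /V mulmxKpV // MWG submxMl.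
  have [W0 [W0s W0L]] := @build R d istar L Gs V hi hiL
     (fun i h => leq_trans rG (mindim_le d h))
     (fun i _ h => leq_trans (mxrankM_maxl _ _) (leq_trans rM (mindim_le d h))).
  have := Wmin W0; rewrite /loss_st W0s W0L VG.
  rewrite (@ls_decomp _ _ _ _ Xe Y (e2e W L) fr) (@ls_decomp _ _ _ _ Xe FX (e2e W istar) fr) -/Ms -/Gs => H.
  have h1 := frob2_ge0 ((e2e W L - Ms) *m Xe).
  have h2 := frob2_ge0 ((e2e W istar - Gs) *m Xe).
  have h3 := mulr_ge0 (ltW hlam) h2.
  have H0 : frob2 ((e2e W L - Ms) *m Xe) = 0.
    apply/eqP; rewrite eq_le h1 andbT.
    rewrite mulrDr in H; lra.
  by move/frob2_eq0/eqP: H0; rewrite mulmx_free_eq0 // subr_eq0 => /eqP.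
Qed.
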